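(* Let $T$ be a bounded linear operator on a complex Hilbert space. If $\mathcal{N}(T^* )\subseteq\mathcal{N}(T)$ and $T^n$ is hyponormal for some positive integer $n$, then $\mathcal{N}(T^m)=\mathcal{N}(T^{*m})$ for every positive integer $m$.
   Context: $\mathcal{N}(A)$ denotes the kernel of $A$. An operator $A$ is hyponormal if $AA^*\le A^*A$. *)

(* Defs.v *)
From HB Require Import structures.
From mathcomp Require Import all_boot all_order all_algebra.
From mathcomp Require Import complex.
From mathcomp Require Import boolp classical_sets reals.
Set Implicit Arguments. Unset Strict Implicit. Unset Printing Implicit Defensive.
Import Order.TTheory GRing.Theory Num.Theory.
Local Open Scope ring_scope.
Local Open Scope classical_set_scope.

Section Hilbert.
Variables (R : realType) (V : lmodType R[i]) (ip : V -> V -> R[i]).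

Definition is_inner_product : Prop :=
  [/\ forall (a : R[i]) (x y z : V), ip (a *: x + y) z = a * ip x z + ip y z,
      forall x y : V, ip y x = conjc (ip x y),
      forall x : V, 0 <= ip x x
    & forall x : V, ip x x = 0 -> x = 0].

Definition ipnorm (x : V) : R := Num.sqrt (@complex.Re R (ip x x)).

Definition ip_complete : Prop :=
  forall u : nat -> V,
    (forall e : R, 0 < e -> exists N, forall m n, (N <= m)%N -> (N <= n)%N ->
        ipnorm (u m - u n) < e) ->
    exists l : V, forall e : R, 0 < e -> exists N, forall n, (N <= n)%N ->
        ipnorm (u n - l) < e.

Definition bounded_linear (A : V -> V) : Prop :=
  [/\ forall (a : R[i]) (x y : V), A (a *: x + y) = a *: A x + A y
    & exists M : R, forall x, ipnorm (A x) <= M * ipnorm x].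

Definition is_adjoint (A Astar : V -> V) : Prop :=
  forall x y : V, ip (A x) y = ip x (Astar y).

Definition op_le (A B : V -> V) : Prop := forall x : V, ip (A x) x <= ip (B x) x.

Definition hyponormal (A : V -> V) : Prop :=
  forall Astar : V -> V, is_adjoint A Astar -> op_le (A \o Astar) (Astar \o A).

Definition kernel (A : V -> V) : set V := [set x | A x = 0].

Definition opow (A : V -> V) (n : nat) : V -> V := iter n A.

End Hilbert.

(* Main.v *)
Require Import Defs.
From HB Require Import structures.
From mathcomp Require Import all_boot all_order all_algebra.
From mathcomp Require Import complex.
From mathcomp Require Import boolp classical_sets reals.
Import Order.TTheory GRing.Theory Num.Theory.
Local Open Scope ring_scope.
Local Open Scope classical_set_scope.

Section Aux.
Context {R : realType} {V : lmodType R[i]} {ip : V -> V -> R[i]}.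
Hypothesis Hip : is_inner_product ip.

Lemma ip0l z : ip 0 z = 0.
Proof.
case: Hip => lin _ _ _.
have := lin 1 0 0 z; rewrite scale1r addr0 mul1r.
by move/(congr1 (fun t => t - ip 0 z)); rewrite subrr addrK => <-.
Qed.

Lemma ip0r z : ip z 0 = 0.
Proof. by case: Hip => _ cs _ _; rewrite cs ip0l conjc0. Qed.

Lemma adj_sym {A B : V -> V} : (forall u v, ip (A u) v = ip u (B v)) ->
  forall u v, ip (B u) v = ip u (A v).
Proof.
case: Hip => _ cs _ _ H u v.
by rewrite cs -H -cs.
Qed.

Lemma adj0 {A B : V -> V} : (forall u v, ip (A u) v = ip u (B v)) -> B 0 = 0.
Proof.
case: Hip => _ _ _ pd H; apply: pd.
by rewrite -H ip0r.
Qed.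

Lemma iter0 (B : V -> V) k : B 0 = 0 -> iter k B 0 = 0.
Proof. by move=> H; elim: k => //= k ->. Qed.

Lemma lemL {A B : V -> V} : (forall u v, ip (A u) v = ip u (B v)) ->
  (forall x, B x = 0 -> A x = 0) ->
  forall k x, iter k.+1 B x = 0 -> B x = 0.
Proof.
move=> H hk; elim=> [|k IH] x //= h.
apply: IH => /=.
case: Hip => _ _ _ pd; apply: pd.
by rewrite -H hk ?ip0l.
Qed.

Lemma kerE {A B : V -> V} : (forall u v, ip (A u) v = ip u (B v)) ->
  (forall x, B x = 0 -> A x = 0) ->
  forall k, (0 < k)%N -> kernel (opow B k) = kernel B.
Proof.
move=> H hk [//|k] _; rewrite /kernel /opow; apply/seteqP; split => x /=.
  exact: lemL.
by move=> Bx; rewrite -[B (iter k B x)]/(iter k.+1 B x) iterSr Bx iter0 // (adj0 H).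
Qed.

Lemma adj_pow {A B : V -> V} : (forall u v, ip (A u) v = ip u (B v)) ->
  forall k, is_adjoint ip (opow A k) (opow B k).
Proof.
move=> H; elim=> [//|k IH] x y; rewrite /opow /= H.
by rewrite IH /opow -iterSr.
Qed.
End Aux.

Theorem corollary5p7 (R : realType) (V : lmodType R[i]) (ip : V -> V -> R[i])
  (Hip : is_inner_product ip) (Hcomplete : ip_complete ip)
  (T Tstar : V -> V) (HT : bounded_linear ip T) (Hadj : is_adjoint ip T Tstar) :
  kernel Tstar `<=` kernel T ->
  (exists n : nat, (0 < n)%N /\ hyponormal ip (opow T n)) ->
  forall m : nat, (0 < m)%N -> kernel (opow T m) = kernel (opow Tstar m).
Proof.
move=> hk [n [n0 hyp]] m m0.
have H1 : forall u v, ip (T u) v = ip u (Tstar v) := Hadj.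
have H2 := adj_sym Hip H1.
have hk' : forall x, Tstar x = 0 -> T x = 0 by move=> x; apply: hk.
have hTT : forall x, T x = 0 -> Tstar x = 0.
  move=> x Tx.
  have Tn : opow T n x = 0.
    by move: n0; case: n {hyp} => // k _; rewrite /opow iterSr Tx iter0 // (adj0 Hip H2).
  have : kernel (opow Tstar n) x.
    have h := hyp _ (adj_pow H1 n) x.
    have e1 : ip ((opow T n \o opow Tstar n) x) x =
              ip (opow Tstar n x) (opow Tstar n x) by rewrite /= (adj_pow H1).
    have e2 : ip ((opow Tstar n \o opow T n) x) x = 0.
      by rewrite /= Tn /opow iter0 ?(adj0 Hip H1) // (ip0l Hip).
    rewrite e1 e2 in h.
    case: Hip => _ _ pos pd; apply: pd.
    by apply/eqP; rewrite eq_le h pos.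
  move=> hx; have E := kerE Hip H1 hk' n n0; rewrite E in hx; exact: hx.
rewrite (kerE Hip H2 hTT m m0) (kerE Hip H1 hk' m m0).
apply/seteqP; split => x; rewrite /kernel /=; [exact: hTT | exact: hk'].
Qed.
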